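(* Let $N=2n\ge2$ and $L\ge1$. For every $c=c_L\otimes\cdots\otimes c_1\in B^{1\otimes L}$, $$\overline D_{B^{1\otimes L}}(c)=\overline D_{B^{1\vee\otimes L}}(c^{\vee*}),\qquad\text{where } c^{\vee*}=c_L^{\vee*}\otimes\cdots\otimes c_1^{\vee*}\ \text{ and } j^{\vee*}=(N+1-j)^\vee.$$
   Context: $B^1$ is the $U_q'(A^{(1)}_{N-1})$-crystal with elements $1,\dots,N$, $f_i(i)=i+1$ ($1\le i\le N-1$), $f_0(N)=1$, all other $f_i$ zero. $B^{1\vee}$ is its dual: elements $j^\vee$, $f_i(b^\vee)=e_i(b)^\vee$ (so $f_i((i+1)^\vee)=i^\vee$, $f_0(1^\vee)=N^\vee$). Tensor products: $f_i(b_2\otimes b_1)=f_i(b_2)\otimes b_1$ if $\varepsilon_i(b_2)\ge\varphi_i(b_1)$, else $b_2\otimes f_i(b_1)$; $e_i(b_2\otimes b_1)=e_i(b_2)\otimes b_1$ if $\varepsilon_i(b_2)>\varphi_i(b_1)$, else $b_2\otimes e_i(b_1)$. For $B_0\in\{B^1,B^{1\vee}\}$ with leading element $u=1$ (resp. $u=N^\vee$), the local coenergy $H:B_0\otimes B_0\to\mathbb Z_{\ge0}$ is the unique function constant on classical components (components after deleting $0$-arrows) with $H(u\otimes u)=0$ and, whenever $e_0(x\otimes y)\ne0$, $H(e_0(x\otimes y))=H(x\otimes y)+1$ if $e_0(x\otimes y)=e_0(x)\otimes y$ and $H(x\otimes y)-1$ otherwise. The intrinsic coenergy on $B_0^{\otimes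 L}$ is $\overline D_{B_0^{\otimes L}}(b_L\otimes\cdots\otimes b_1)=\sum_{i=1}^{L-1}(L-i)\,H(b_{i+1}\otimes b_i)$. *)

(* Defs.v *)
From mathcomp Require Import all_boot.
Set Implicit Arguments. Unset Strict Implicit. Unset Printing Implicit Defensive.

(* Colours of U_q'(A^{(1)}_{N-1}) are i : 'I_N (colour 0 = val i == 0).
   A (finite) crystal on T is given by its Kashiwara operators
   e f : 'I_N -> T -> option T  (None stands for 0). *)

Section Crystal.
Variable N : nat.

(* B^1 : elements 1..N, encoded as x : 'I_N with x standing for x+1.
   f_i(i) = i+1 (1 <= i <= N-1), f_0(N) = 1; e_i is the inverse. *)
Definition B1f (i x : 'I_N) : option 'I_N :=
  if (if val i == 0 then val x == N.-1 else (val x).+1 == val i)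
  then insub ((val x).+1 %% N) else None.
Definition B1e (i x : 'I_N) : option 'I_N :=
  if (if val i == 0 then val x == 0 else val x == val i)
  then insub ((val x + N.-1) %% N) else None.

Variable T : finType.
Variables (e f : 'I_N -> T -> option T).

Definition str (g : 'I_N -> T -> option T) (i : 'I_N) (b : T) : nat :=
  \max_(k < #|T|.+1 | iter k (obind (g i)) (Some b) != None) k.
Definition eps i b := str e i b.
Definition phi i b := str f i b.

(* tensor product b2 (x) b1, encoded as the pair (b2, b1) *)
Definition tens_f (i : 'I_N) (p : T * T) : option (T * T) :=
  let: (b2, b1) := p in
  if eps i b2 >= phi i b1 then omap (fun x => (x, b1)) (f i b2)
  else omap (fun y => (b2, y)) (f i b1).
Definition tens_e (i : 'I_N) (p : T * T) : option (T * T) :=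
  let: (b2, b1) := p in
  if eps i b2 > phi i b1 then omap (fun x => (x, b1)) (e i b2)
  else omap (fun y => (b2, y)) (e i b1).

Definition classical_rel : rel (T * T) := fun p q =>
  [exists i : 'I_N, (val i != 0) &&
     ((tens_e i p == Some q) || (tens_f i p == Some q))].

Definition is_local_coenergy (u : T) (H : T * T -> nat) : Prop :=
  [/\ (forall p q, connect classical_rel p q -> H p = H q),
      H (u, u) = 0 &
      forall (i0 : 'I_N) x y z, val i0 = 0 -> tens_e i0 (x, y) = Some z ->
        if (e i0 x == Some z.1) && (z.2 == y)
        then H z = H (x, y) + 1
        else H z + 1 = H (x, y)].

(* intrinsic coenergy of b_L (x) ... (x) b_1, encoded as the list
   s = [:: b_1; b_2; ...; b_L]:  sum_{i=1}^{L-1} (L-i) H(b_{i+1} (x) b_i) *)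
Definition coenergy (H : T * T -> nat) (s : seq T) : nat :=
  match s with
  | [::] => 0
  | x0 :: _ => \sum_(j < (size s).-1)
                 ((size s).-1 - j) * H (nth x0 s j.+1, nth x0 s j)
  end.
End Crystal.

(* The dual crystal B^{1 vee}: element j^vee encoded as the same x : 'I_N
   (x standing for (x+1)^vee), with f_i(b^vee) = e_i(b)^vee and
   e_i(b^vee) = f_i(b)^vee, i.e. the roles of e and f are swapped. *)

(* Main.v *)
Require Import Defs.
From mathcomp Require Import all_boot zify.
Set Implicit Arguments. Unset Strict Implicit. Unset Printing Implicit Defensive.

Lemma iter_none (A : Type) (h : A -> option A) k : iter k (obind h) None = None.
Proof. by elim: k => //= k ->. Qed.

Lemma str0 N (T : finType) (g : 'I_N -> T -> option T) i b :
  g i b = None -> str g i b = 0.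
Proof.
move=> H; rewrite /str; apply/eqP; rewrite -leqn0; apply/bigmax_leqP => -[[|k] hk] //=.
by rewrite -[obind _ _]/(iter k.+1 (obind (g i)) (Some b)) iterSr /= H iter_none.
Qed.

Lemma strpos N (T : finType) (g : 'I_N -> T -> option T) i b :
  g i b != None -> 0 < str g i b.
Proof.
move=> H; have hT : 0 < #|T| by apply/card_gt0P; exists b.
have h1 : 1 < #|T|.+1 by [].
rewrite /str.
exact: (leq_trans _ (@leq_bigmax_cond _ (fun k : 'I__ => iter k (obind (g i)) (Some b) != None) (fun k => val k) (Ordinal h1) H)).
Qed.

Section S.
Variable N : nat.
Hypothesis hN : 1 < N.
Let hN0 : 0 < N. Proof. exact: ltnW hN. Qed.

Definition prd (y : 'I_N) : 'I_N := Ordinal (ltn_pmod (val y + N.-1) hN0).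
Definition ng (y : 'I_N) : 'I_N := Ordinal (ltn_pmod (N - val y) hN0).

Lemma val_prd (y : 'I_N) : val (prd y) = if val y == 0 then N.-1 else (val y).-1.
Proof.
case: y => m hm /=; case: (eqVneq m 0) => [->|h].
  by rewrite add0n modn_small // prednK // ltnW.
have -> : m + N.-1 = m.-1 + N by lia.
rewrite modnDr modn_small //; lia.
Qed.

Lemma val_ng (y : 'I_N) : val (ng y) = if val y == 0 then 0 else N - val y.
Proof.
case: y => m hm /=; case: (eqVneq m 0) => [->|h]; first by rewrite subn0 modnn.
by rewrite modn_small //; lia.
Qed.

Lemma prd_neq (y : 'I_N) : prd y != y.
Proof. apply/eqP => /(congr1 val); rewrite val_prd; case: y => m hm /=; case: eqP; lia. Qed.

Lemma B1e_yy (y : 'I_N) : B1e y y = Some (prd y).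
Proof.
rewrite /B1e ifT; last by case: eqP.
rewrite insubT ?ltn_pmod // => h.
by congr Some; apply: val_inj.
Qed.

Lemma B1e_neq (x y : 'I_N) : x != y -> B1e y x = None.
Proof.
move=> /eqP hxy; rewrite /B1e; case: eqP => h.
  by case: eqP => // h'; case: hxy; apply: val_inj; rewrite h h'.
by case: eqP => // h'; case: hxy; apply: val_inj.
Qed.

Lemma B1f_yy (y : 'I_N) : B1f y y = None.
Proof.
rewrite /B1f ifF //; case: y => m hm /=; case: eqP => h; apply/eqP; lia.
Qed.

Lemma B1f_ng_eq (y : 'I_N) : B1f (ng y) (rev_ord y) = Some (rev_ord (prd y)).
Proof.
rewrite /B1f ifT; last first.
  rewrite val_ng; case: y => m hm /=; case: (eqVneq m 0) => h /=; first by apply/eqP; lia.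
  case: eqP => h2; first lia. apply/eqP; lia.
rewrite insubT ?ltn_pmod // => h; congr Some; apply: val_inj => /=.
have := val_prd y; case: y h => m hm h /= ->; case: (eqVneq m 0) => h0.
  have -> : (N - m.+1).+1 = N by lia.
  rewrite modnn; lia.
rewrite modn_small; lia.
Qed.

Lemma B1f_ng_neq (x y : 'I_N) : x != y -> B1f (ng y) (rev_ord x) = None.
Proof.
move=> /eqP hxy; rewrite /B1f val_ng; move: hxy.
case: x => a ha; case: y => b hb /= hxy.
case: (eqVneq b 0) => h /=.
  by case: eqP => // h'; case: hxy; apply: val_inj => /=; lia.
case: eqP => h1; first lia.
by case: eqP => // h'; case: hxy; apply: val_inj => /=; lia.
Qed.

Lemma B1e_ng (y : 'I_N) : B1e (ng y) (rev_ord y) = None.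
Proof.
rewrite /B1e val_ng; case: y => b hb /=.
by case: (eqVneq b 0) => h /=; repeat (case: eqP => ? //; try lia).
Qed.

Lemma step1 (x y : 'I_N) : tens_e (@B1e N) (@B1f N) y (x, y) =
  Some (if x == y then (prd x, y) else (x, prd y)).
Proof.
rewrite /tens_e /phi (str0 (B1f_yy y)) /eps.
case: (eqVneq x y) => [->|h].
  by rewrite strpos ?B1e_yy.
by rewrite (str0 (B1e_neq h)) ltnn B1e_yy.
Qed.

Lemma step2 (x y : 'I_N) : tens_e (@B1f N) (@B1e N) (ng y) (rev_ord x, rev_ord y) =
  Some (if x == y then (rev_ord (prd x), rev_ord y) else (rev_ord x, rev_ord (prd y))).
Proof.
rewrite /tens_e /phi (str0 (B1e_ng y)) /eps.
case: (eqVneq x y) => [->|h].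
  by rewrite strpos ?B1f_ng_eq.
by rewrite (str0 (B1f_ng_neq h)) ltnn B1f_ng_eq.
Qed.

Definition dist (a b : 'I_N) := if val a <= val b then val b - val a else val b + N - val a.

Lemma dist_prd (a b : 'I_N) k : a != b -> dist a b = k.+1 -> dist a (prd b) = k.
Proof.
rewrite /dist -val_eqE val_prd; case: a b => [a ha] [b hb] /=.
case: (eqVneq b 0) => h0 /=; move=> hne hk; move: hk;
  repeat (case: leqP => ? /=); lia.
Qed.

Lemma dist0 (a b : 'I_N) : dist a b = 0 -> a = b.
Proof.
rewrite /dist => hk; apply: val_inj; move: hk; case: a b => [a ha] [b hb] /=.
case: leqP => ? ; lia.
Qed.

Lemma dist_neq (a b : 'I_N) k : dist a b = k.+1 -> a != b.
Proof. by move=> h; apply/eqP => e; move: h; rewrite e /dist leqnn subnn. Qed.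

Lemma key (u1 u2 : 'I_N) (H1 H2 : 'I_N * 'I_N -> nat) (hu1 : val u1 = 0) (hu2 : val u2 = N.-1)
  (hH1 : is_local_coenergy (@B1e N) (@B1f N) u1 H1)
  (hH2 : is_local_coenergy (@B1f N) (@B1e N) u2 H2) (x y : 'I_N) :
  H1 (x,y) = H2 (rev_ord x, rev_ord y).
Proof.
case: hH1 => c1 z1 e1; case: hH2 => c2 z2 e2.
have S1 : forall a b : 'I_N, val b != 0 ->
    H1 (a,b) = H1 (if a == b then (prd a, b) else (a, prd b)).
  move=> a b hb; apply: c1; apply: connect1; apply/existsP; exists b.
  by rewrite hb step1 eqxx.
have S2 : forall a b : 'I_N, val b != 0 -> H2 (rev_ord a, rev_ord b) =
    H2 (if a == b then (rev_ord (prd a), rev_ord b) else (rev_ord a, rev_ord (prd b))).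
  move=> a b hb; apply: c2; apply: connect1; apply/existsP; exists (ng b).
  rewrite step2 eqxx andbT val_ng (negbTE hb).
  by move: hb; case: b => b hb /= hb0; apply/eqP; lia.
have Z1 : forall a b : 'I_N, val b = 0 -> a != b -> H1 (a, prd b) + 1 = H1 (a, b).
  move=> a b hb hab; have := e1 b a b _ hb (step1 a b).
  by rewrite (negbTE hab) /= (negbTE (prd_neq b)) andbF.
have Z2 : forall a b : 'I_N, val b = 0 -> a != b ->
    H2 (rev_ord a, rev_ord (prd b)) + 1 = H2 (rev_ord a, rev_ord b).
  move=> a b hb hab; have := e2 (ng b) (rev_ord a) (rev_ord b) _ _ (step2 a b).
  rewrite (negbTE hab) /= (inj_eq rev_ord_inj) (negbTE (prd_neq b)) andbF.
  by apply; rewrite hb subn0 modnn.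
have A : forall k (a : 'I_N), val a = k -> H1 (a,a) = H2 (rev_ord a, rev_ord a).
  elim=> [|k IH] a ha.
    have -> : a = u1 by apply: val_inj; rewrite ha hu1.
    have -> : rev_ord u1 = u2 by apply: val_inj; rewrite /= hu1 hu2 subn1.
    by rewrite z1 z2.
  have hb : val a != 0 by rewrite ha.
  have hp : prd a != a := prd_neq a.
  rewrite (S1 a a hb) (S2 a a hb) eqxx (S1 (prd a) a hb) (S2 (prd a) a hb) (negbTE hp).
  by apply: IH; rewrite val_prd (negbTE hb) ha.
have B : forall k (a b : 'I_N), dist a b = k -> H1 (a,b) = H2 (rev_ord a, rev_ord b).
  elim=> [|k IH] a b hk.
    by rewrite (dist0 hk); apply: (A _ b).
  have hab := dist_neq hk.
  have hk' := dist_prd hab hk.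
  case: (eqVneq (val b) 0) => hb0.
    by rewrite -(Z1 a b hb0 hab) -(Z2 a b hb0 hab) (IH a (prd b) hk').
  by rewrite (S1 a b hb0) (S2 a b hb0) (negbTE hab) (IH a (prd b) hk').
exact: (B _ x y).
Qed.
End S.

Theorem proposition42 (n L : nat) (hn : 1 <= n) (hL : 1 <= L)
  (u1 u2 : 'I_(n.*2)) (hu1 : val u1 = 0) (hu2 : val u2 = (n.*2).-1)
  (H1 H2 : 'I_(n.*2) * 'I_(n.*2) -> nat)
  (hH1 : is_local_coenergy (@B1e (n.*2)) (@B1f (n.*2)) u1 H1)
  (hH2 : is_local_coenergy (@B1f (n.*2)) (@B1e (n.*2)) u2 H2)
  (c : L.-tuple 'I_(n.*2)) :
  coenergy H1 c = coenergy H2 (map (@rev_ord (n.*2)) c).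
Proof.
have hN : 1 < n.*2 by rewrite -addnn; lia.
have K := @key _ hN u1 u2 H1 H2 hu1 hu2 hH1 hH2.
case: c => s hs /=; case: s hs => [|x0 s] hs //.
rewrite /coenergy size_map /=.
rewrite -[rev_ord x0 :: _]/(map (@rev_ord _) (x0 :: s)).
apply: eq_bigr => j _.
have hj := ltn_ord j.
by rewrite !(nth_map x0) //= ?K //; apply: ltnW.
Qed.
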